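(* Let $\mathcal{S}$ be a nonempty semigroup with set of idempotents $E(\mathcal{S})$. Let $T$ be a finite $\mathcal{S}$-valued sequence with $\prod(T)\cap E(\mathcal{S})=\emptyset$, let $x$ be a term of $T$, and let $T'$ denote the sequence obtained from $T$ by deleting one occurrence of the term $x$. Then $|\prod(T)\setminus \prod(T')|\ge 1$ (equivalently, $\lambda_{T'}(x)=|\prod(T'\cdot x)\setminus\prod(T')|\ge 1$, where $T'\cdot x$ is $T'$ with $x$ appended).
   Context: For a finite sequence $T=x_1x_2\cdots x_\ell$ of elements of a semigroup $(\mathcal{S},* )$, $\prod(T)$ denotes the set of all products $x_{i_{\sigma(1)}}*x_{i_{\sigma(2)}}*\cdots*x_{i_{\sigma(k)}}$, where $x_{i_1}\cdots x_{i_k}$ ranges over all nonempty subsequences of $T$ and $\sigma$ over all permutations of $\{1,\dots,k\}$ (so $\prod$ of the empty sequence is $\emptyset$). $E(\mathcal{S})$ is the set of $e\in\mathcal{S}$ with $e*e=e$. *)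

(* Defs.v *)
From mathcomp Require Import all_boot.
From Stdlib Require Import Permutation.
Set Implicit Arguments. Unset Strict Implicit. Unset Printing Implicit Defensive.

(* A semigroup is a type S with an associative binary operation op
   (the associativity hypothesis is an explicit binder of the theorem). *)

Definition seqprod {S : Type} (op : S -> S -> S) (s : seq S) (y : S) : Prop :=
  match s with
  | [::] => False
  | x :: s' => y = foldl op x s'
  end.

(* Pi(T): all products of all nonempty subsequences of T, in every order.
   A subsequence is [mask m T]; an ordering of it is any Stdlib Permutation. *)
Definition Prods {S : Type} (op : S -> S -> S) (T : seq S) : S -> Prop :=
  fun y => exists (m : bitseq) (s : seq S),
      Permutation (mask m T) s /\ seqprod op s y.

Definition idempotent_el {S : Type} (op : S -> S -> S) (e : S) : Prop := op e e = e.

(* Main.v *)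
Require Import Defs.
From mathcomp Require Import all_boot.
From Stdlib Require Import Permutation Classical.
From Stdlib Require List.
From mathcomp Require Import zify.

Section Aux.
Variable (S : Type) (op : S -> S -> S).

Fixpoint lu (n : nat) (A : list S) : list (list S) :=
  match n with
  | 0 => [:: [::]]
  | n'.+1 => [::] :: List.concat (List.map (fun a => List.map (cons a) (lu n' A)) A)
  end.

Lemma lu_in n A s : (size s <= n)%N -> (forall a, List.In a s -> List.In a A) ->
  List.In s (lu n A).
Proof.
elim: n s => [|n IH] [|a s] //= Hs HA; first by left.
- by left.
- right. apply List.in_concat. exists (List.map (cons a) (lu n A)). split.
  + apply List.in_map_iff. exists a. split => //. apply HA. by left.
  + apply List.in_map. apply IH => // b Hb. apply HA. by right.
Qed.

Lemma mask_size (m : bitseq) (s : list S) : (size (mask m s) <= size s)%N.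
Proof.
elim: s m => [|a s IH] [|b m] //=. case: b => /=; last by apply: leq_trans (IH m) _.
exact: IH.
Qed.

Lemma mask_in (m : bitseq) (s : list S) a : List.In a (mask m s) -> List.In a s.
Proof.
elim: s m => [|b s IH] [|c m] //=. case: c => /=.
- move=> [->|H]; [by left | right; exact: IH H].
- move=> H; right; exact: IH H.
Qed.

Lemma mask_ins (x : S) (m : bitseq) (T1 T2 : list S) :
  exists m', Permutation (mask m' (T1 ++ x :: T2)) (mask m (T1 ++ T2) ++ [:: x]).
Proof.
elim: T1 m => [|a T1 IH] m /=.
- exists (true :: m) => /=. apply Permutation_cons_append.
- case: m => [|b m].
  + have [m'' H] := IH [::]. exists (false :: m''). by rewrite /=.
  + have [m'' H] := IH m. exists (b :: m''). case: b => /=.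
    * by apply perm_skip.
    * exact H.
Qed.

Definition prod (d : S) (s : list S) := match s with [::] => d | a :: s' => foldl op a s' end.

Lemma pig (L : list S) : forall (f : nat -> S), (forall k, List.In (f k) L) ->
  exists i j, (i < j)%N /\ f i = f j.
Proof.
elim: L => [|a L IH] f Hf; first by case: (Hf 0).
case: (classic (exists k, f k = a)) => [[k0 Hk0]|Hn].
- case: (classic (exists j, (k0 < j)%N /\ f j = a)) => [[j [Hj Hfj]]|Hn2].
  + exists k0, j. by rewrite Hk0 Hfj.
  + have [i [j [Hij Hfij]]] : exists i j, (i < j)%N /\ f (i + k0.+1) = f (j + k0.+1).
      apply: IH => k. case: (Hf (k + k0.+1)) => // Heq. exfalso; apply: Hn2.
      exists (k + k0.+1). split => //. by rewrite addnS ltnS leq_addl.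
    exists (i + k0.+1), (j + k0.+1). by rewrite ltn_add2r.
- have [i [j H]] := IH f (fun k => match Hf k with
     | or_introl e => False_ind _ (Hn (ex_intro _ k (esym e))) | or_intror h => h end).
  by exists i, j.
Qed.

End Aux.

Theorem lemma3p1 (S : Type) (op : S -> S -> S)
  (op_assoc : forall a b c, op a (op b c) = op (op a b) c)
  (S_nonempty : inhabited S)
  (T1 T2 : seq S) (x : S)
  (hE : forall e, Prods op (T1 ++ x :: T2) e -> ~ idempotent_el op e) :
  exists y, Prods op (T1 ++ x :: T2) y /\ ~ Prods op (T1 ++ T2) y.
Proof.
apply: NNPP => Hn.
have H : forall y, Prods op (T1 ++ x :: T2) y -> Prods op (T1 ++ T2) y.
  move=> y Hy. apply: NNPP => Hy'. apply: Hn. by exists y.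
pose pw k := iter k (fun y => op y x) x.
have pwS k : pw k.+1 = op (pw k) x by [].
have Hall : forall k, Prods op (T1 ++ x :: T2) (pw k).
  elim=> [|k IH].
  - have [m' Hm'] := @mask_ins S x [::] T1 T2.
    simpl in Hm'. exists m', [:: x]. by split.
  - have [m [s [Hp Hs]]] := H _ IH.
    have [m' Hm'] := @mask_ins S x m T1 T2.
    exists m', (s ++ [:: x]). split.
    + apply: Permutation_trans Hm' _. by apply Permutation_app_tail.
    + case: s Hp Hs => [|a s] //= _ ->. by rewrite foldl_cat.
pose L := List.map (@prod S op x) (@lu S (size (T1 ++ T2)) (T1 ++ T2)).
have HL : forall k, List.In (pw k) L.
  move=> k. have [m [s [Hp Hs]]] := H _ (Hall k).
  have -> : pw k = @prod S op x s by case: s Hp Hs.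
  apply: List.in_map. apply: (@lu_in S).
  - have HH := Permutation_length Hp. change (size (mask m (T1 ++ T2)) = size s) in HH. rewrite -HH. exact: (@mask_size S).
  - move=> a Ha. apply: (@mask_in S m). exact: Permutation_in (Permutation_sym Hp) Ha.
have [i [j [Hij Hfij]]] := @pig S L pw HL.
have pwD a b : pw (a + b.+1) = op (pw a) (pw b).
  elim: b => [|b IH]; first by rewrite addn1.
  by rewrite addnS pwS IH -op_assoc.
set d := j - i.
have Hd : (0 < d)%N by rewrite subn_gt0.
have per1 t : pw (i + t) = pw (i + t + d).
  elim: t => [|t IH]; first by rewrite addn0 subnKC // ltnW.
  by rewrite addnS pwS IH addSn pwS.
have perq q t : pw (i + t) = pw (i + t + q * d).
  elim: q => [|q IH]; first by rewrite mul0n addn0.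
  rewrite IH -addnA (per1 (t + q * d)); congr pw; rewrite mulSn; lia.
set M := (i.+1 * d).
have HM : (i <= M.-1)%N.
  rewrite /M -ltnS prednK; last by rewrite muln_gt0.
  by rewrite -{1}(muln1 i.+1) leq_mul2l.
apply: (hE (pw M.-1) (Hall _)).
rewrite /idempotent_el -pwD prednK; last by rewrite muln_gt0.
rewrite -(subnKC HM) (perq i.+1 (M.-1 - i)) /M. by [].
Qed.
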